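(* Let $\mathcal G=\{\psi_\gamma : \gamma:[0,1]\to\mathbb R^2 \text{ piecewise } C^1\}$ be the set of diffeomorphisms of $S^1$ induced by moving the tracer point of a Prytz planimeter of length $\ell$ along arbitrary piecewise $C^1$ curves. Then $\mathcal G$ is a group under composition, and it equals $\mathcal M_0(S^1)$, the group of Möbius transformations $z\mapsto \frac{az+b}{\bar b z+\bar a}$ (with $a,b\in\mathbb C$, $|a|^2-|b|^2=1$), restricted to the unit circle $S^1=\{|z|=1\}\subset\mathbb C$; equivalently, the group of Möbius transformations preserving $S^1$ and its orientation. *)

(* Defs.v *)
From Stdlib Require Import Reals List.
From Coquelicot Require Import Coquelicot.
Open Scope R_scope.

(* A function R -> R is C^1 on [a,b] if it agrees there with a C^1 function
   defined on all of R (equivalent to C^1 with one-sided derivatives at ends). *)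
Definition C1_on (f : R -> R) (a b : R) : Prop :=
  exists g : R -> R,
    (forall t, ex_derive g t) /\
    (forall t, continuity_pt (Derive g) t) /\
    (forall t, a <= t <= b -> f t = g t).

Definition piecewise_C1 (gamma : R -> C) : Prop :=
  exists (n : nat) (p : nat -> R),
    p 0%nat = 0 /\ p n = 1 /\
    (forall i, (i < n)%nat -> p i < p (S i)) /\
    (forall i, (i < n)%nat ->
       C1_on (fun t => fst (gamma t)) (p i) (p (S i)) /\
       C1_on (fun t => snd (gamma t)) (p i) (p (S i))).

(* Motion of a Prytz planimeter of length l: the tracer point is gamma t, the
   rod direction (unit vector from the blade to the tracer) is u t, so the blade
   is at gamma t - l u t.  The no-slip condition (blade velocity parallel to the
   rod) is  l u' = <gamma', u^perp> u^perp  with u^perp = (-u2, u1). *)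
Definition prytz_motion (l : R) (gamma : R -> C) (u : R -> C) : Prop :=
  (forall t, 0 <= t <= 1 -> Cmod (u t) = 1) /\
  (forall t, 0 <= t <= 1 ->
     continuity_pt (fun s => fst (u s)) t /\
     continuity_pt (fun s => snd (u s)) t) /\
  exists S : list R, forall t, 0 < t < 1 -> ~ In t S ->
    exists dg1 dg2 du1 du2 : R,
      derivable_pt_lim (fun s => fst (gamma s)) t dg1 /\
      derivable_pt_lim (fun s => snd (gamma s)) t dg2 /\
      derivable_pt_lim (fun s => fst (u s)) t du1 /\
      derivable_pt_lim (fun s => snd (u s)) t du2 /\
      let w := - dg1 * snd (u t) + dg2 * fst (u t) in
      l * du1 = - snd (u t) * w /\
      l * du2 = fst (u t) * w.

(* psi_gamma maps the initial direction z to the final direction w. *)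
Definition prytz_transfer (l : R) (gamma : R -> C) (z w : C) : Prop :=
  exists u : R -> C, prytz_motion l gamma u /\ u 0 = z /\ u 1 = w.

Definition on_S1 (z : C) : Prop := Cmod z = 1.

Definition prytz_group (l : R) (f : C -> C) : Prop :=
  exists gamma : R -> C, piecewise_C1 gamma /\
    forall z, on_S1 z -> prytz_transfer l gamma z (f z).

Definition mobius_S1 (f : C -> C) : Prop :=
  exists a b : C, (Cmod a) ^ 2 - (Cmod b) ^ 2 = 1 /\
    forall z, on_S1 z ->
      f z = Cdiv (Cplus (Cmult a z) b) (Cplus (Cmult (Cconj b) z) (Cconj a)).

(* Main.v *)
Require Import Defs.
From Stdlib Require Import Reals List.
From Coquelicot Require Import Coquelicot.
Open Scope R_scope.
From Stdlib Require Import Lra Lia Psatz FunctionalExtensionality Classical.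

Lemma dpl_eq f t l l' : derivable_pt_lim f t l -> l = l' -> derivable_pt_lim f t l'.
Proof. intros H ->; exact H. Qed.

Lemma dpl_ext f g t l : (forall s, f s = g s) -> derivable_pt_lim f t l -> derivable_pt_lim g t l.
Proof. intros H; replace g with f; auto. apply functional_extensionality; auto. Qed.

Lemma dplus f g t a b : derivable_pt_lim f t a -> derivable_pt_lim g t b ->
  derivable_pt_lim (fun s => f s + g s) t (a + b).
Proof. intros; apply (derivable_pt_lim_plus f g); auto. Qed.
Lemma dminus f g t a b : derivable_pt_lim f t a -> derivable_pt_lim g t b ->
  derivable_pt_lim (fun s => f s - g s) t (a - b).
Proof. intros; apply (derivable_pt_lim_minus f g); auto. Qed.
Lemma dmult f g t a b : derivable_pt_lim f t a -> derivable_pt_lim g t b ->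
  derivable_pt_lim (fun s => f s * g s) t (a * g t + f t * b).
Proof. intros; apply (derivable_pt_lim_mult f g); auto. Qed.
Lemma dopp f t a : derivable_pt_lim f t a -> derivable_pt_lim (fun s => - f s) t (- a).
Proof. intros; apply (derivable_pt_lim_opp f); auto. Qed.
Lemma dconst c t : derivable_pt_lim (fun _ => c) t 0.
Proof. apply derivable_pt_lim_const. Qed.
Lemma ddiv f g t a b : derivable_pt_lim f t a -> derivable_pt_lim g t b -> g t <> 0 ->
  derivable_pt_lim (fun s => f s / g s) t ((a * g t - b * f t) / (g t * g t)).
Proof. intros. eapply dpl_eq. apply (derivable_pt_lim_div f g t a b); auto. unfold Rsqr; reflexivity. Qed.
Lemma dcomp f g t a b : derivable_pt_lim g t a -> derivable_pt_lim f (g t) b ->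
  derivable_pt_lim (fun s => f (g s)) t (b * a).
Proof. intros; apply (derivable_pt_lim_comp g f); auto. Qed.

Definition CD (f : R -> C) (t : R) (d : C) : Prop :=
  derivable_pt_lim (fun s => fst (f s)) t (fst d) /\
  derivable_pt_lim (fun s => snd (f s)) t (snd d).

Lemma CD_eq (f : R -> C) t d d' : CD f t d -> d = d' -> CD f t d'.
Proof. intros H ->; exact H. Qed.
Lemma CD_ext (f g : R -> C) t d : (forall s, f s = g s) -> CD f t d -> CD g t d.
Proof. intros H; replace g with f; auto. apply functional_extensionality; auto. Qed.

Lemma CD_const c t : CD (fun _ => c) t 0%C.
Proof. split; apply dconst. Qed.

Lemma CD_plus (f g : R -> C) t a b : CD f t a -> CD g t b -> CD (fun s => f s + g s)%C t (a + b)%C.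
Proof. intros [H1 H2] [H3 H4]; split; simpl; apply dplus; auto. Qed.
Lemma CD_minus (f g : R -> C) t a b : CD f t a -> CD g t b -> CD (fun s => f s - g s)%C t (a - b)%C.
Proof. intros [H1 H2] [H3 H4]; split; simpl; apply dplus; auto; apply dopp; auto. Qed.
Lemma CD_mult (f g : R -> C) t a b : CD f t a -> CD g t b ->
  CD (fun s => f s * g s)%C t (a * g t + f t * b)%C.
Proof.
  intros [H1 H2] [H3 H4]; split; simpl.
  - eapply dpl_eq. apply dminus; apply dmult; eauto. simpl; ring.
  - eapply dpl_eq. apply dplus; apply dmult; eauto. simpl; ring.
Qed.
Lemma CD_conj (f : R -> C) t a : CD f t a -> CD (fun s => Cconj (f s)) t (Cconj a).
Proof. intros [H1 H2]; split; simpl; auto. apply dopp; auto. Qed.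

Lemma CD_inv (f : R -> C) t a : f t <> 0%C -> CD f t a -> CD (fun s => / f s)%C t (- a / (f t * f t))%C.
Proof.
  intros Hn [H1 H2].
  assert (Hp : fst (f t) ^ 2 + snd (f t) ^ 2 <> 0).
  { intro E. apply Hn. destruct (f t) as [x y]; simpl in *.
    assert (x = 0) by nra. assert (y = 0) by nra. subst; reflexivity. }
  assert (Dn : derivable_pt_lim (fun s => fst (f s) ^ 2 + snd (f s) ^ 2) t
                 (2 * fst (f t) * fst a + 2 * snd (f t) * snd a)).
  { eapply dpl_ext. intro s. simpl. reflexivity.
    eapply dpl_eq. apply dplus; apply dmult; try apply dmult; eauto; apply dconst.
    simpl; ring. }
  split; simpl.
  - eapply dpl_eq. apply ddiv; eauto.
    unfold Cdiv, Cinv, Cmult, Copp; simpl. destruct (f t) as [x y], a as [p q]; simpl in *.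
    field; nra.
  - eapply dpl_eq. apply ddiv; eauto. apply dopp; eauto.
    unfold Cdiv, Cinv, Cmult, Copp; simpl. destruct (f t) as [x y], a as [p q]; simpl in *.
    field; nra.
Qed.

Lemma CD_div (f g : R -> C) t a b : g t <> 0%C -> CD f t a -> CD g t b ->
  CD (fun s => f s / g s)%C t ((a * g t - f t * b) / (g t * g t))%C.
Proof.
  intros Hn Hf Hg. unfold Cdiv.
  eapply CD_eq. apply CD_mult; eauto. apply CD_inv; eauto.
  cbv beta. field. auto.
Qed.

Lemma CD_real f t a : derivable_pt_lim f t a -> CD (fun s => RtoC (f s)) t (RtoC a).
Proof. intros H; split; simpl; auto. apply dconst. Qed.

Lemma cplus f g t : continuity_pt f t -> continuity_pt g t -> continuity_pt (fun s => f s + g s) t.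
Proof. intros; apply (continuity_pt_plus f g); auto. Qed.
Lemma cminus f g t : continuity_pt f t -> continuity_pt g t -> continuity_pt (fun s => f s - g s) t.
Proof. intros; apply (continuity_pt_minus f g); auto. Qed.
Lemma cmult f g t : continuity_pt f t -> continuity_pt g t -> continuity_pt (fun s => f s * g s) t.
Proof. intros; apply (continuity_pt_mult f g); auto. Qed.
Lemma copp f t : continuity_pt f t -> continuity_pt (fun s => - f s) t.
Proof. intros; apply (continuity_pt_opp f); auto. Qed.
Lemma cconst c t : continuity_pt (fun _ => c) t.
Proof. apply continuity_pt_const; intros x y; auto. Qed.
Lemma cdiv f g t : continuity_pt f t -> continuity_pt g t -> g t <> 0 -> continuity_pt (fun s => f s / g s) t.
Proof. intros; apply (continuity_pt_div f g); auto. Qed.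
Lemma ccomp f g t : continuity_pt g t -> continuity_pt f (g t) -> continuity_pt (fun s => f (g s)) t.
Proof. intros; apply (continuity_pt_comp g f); auto. Qed.
Lemma cext f g t : (forall s, f s = g s) -> continuity_pt f t -> continuity_pt g t.
Proof. intros H; replace g with f; auto. apply functional_extensionality; auto. Qed.

Definition CC (f : R -> C) (t : R) : Prop :=
  continuity_pt (fun s => fst (f s)) t /\ continuity_pt (fun s => snd (f s)) t.

Lemma CC_const c t : CC (fun _ => c) t.
Proof. split; apply cconst. Qed.
Lemma CC_plus (f g : R -> C) t : CC f t -> CC g t -> CC (fun s => f s + g s)%C t.
Proof. intros [H1 H2] [H3 H4]; split; simpl; apply cplus; auto. Qed.
Lemma CC_opp (f : R -> C) t : CC f t -> CC (fun s => - f s)%C t.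
Proof. intros [H1 H2]; split; simpl; apply copp; auto. Qed.
Lemma CC_minus (f g : R -> C) t : CC f t -> CC g t -> CC (fun s => f s - g s)%C t.
Proof. intros [H1 H2] [H3 H4]; split; simpl; apply cplus; auto; apply copp; auto. Qed.
Lemma CC_mult (f g : R -> C) t : CC f t -> CC g t -> CC (fun s => f s * g s)%C t.
Proof.
  intros [H1 H2] [H3 H4]; split; simpl.
  - apply cminus; apply cmult; auto.
  - apply cplus; apply cmult; auto.
Qed.
Lemma CC_conj (f : R -> C) t : CC f t -> CC (fun s => Cconj (f s)) t.
Proof. intros [H1 H2]; split; simpl; auto. apply copp; auto. Qed.
Lemma CC_inv (f : R -> C) t : f t <> 0%C -> CC f t -> CC (fun s => / f s)%C t.
Proof.
  intros Hn [H1 H2].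
  assert (Hp : fst (f t) ^ 2 + snd (f t) ^ 2 <> 0).
  { intro E. apply Hn. destruct (f t) as [x y]; simpl in *.
    assert (x = 0) by nra. assert (y = 0) by nra. subst; reflexivity. }
  assert (Cn : continuity_pt (fun s => fst (f s) ^ 2 + snd (f s) ^ 2) t).
  { apply cplus; simpl; apply cmult; auto; apply cmult; auto; apply cconst. }
  split; simpl.
  - apply cdiv; auto.
  - apply cdiv; auto. apply copp; auto.
Qed.
Lemma CC_div (f g : R -> C) t : g t <> 0%C -> CC f t -> CC g t -> CC (fun s => f s / g s)%C t.
Proof. intros. unfold Cdiv. apply CC_mult; auto. apply CC_inv; auto. Qed.
Lemma CC_real f t : continuity_pt f t -> CC (fun s => RtoC (f s)) t.
Proof. intros H; split; simpl; auto. apply cconst. Qed.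
Lemma CC_ext (f g : R -> C) t : (forall s, f s = g s) -> CC f t -> CC g t.
Proof. intros H; replace g with f; auto. apply functional_extensionality; auto. Qed.

Lemma const_list (S : list R) : forall (f : R -> R) a b, a <= b ->
  (forall t, a <= t <= b -> continuity_pt f t) ->
  (forall t, a < t < b -> ~ In t S -> derivable_pt_lim f t 0) -> f a = f b.
Proof.
  induction S as [|s S IH]; intros f a b Hab Hc Hd.
  - destruct (Req_dec a b) as [->|Hne]; auto.
    destruct (MVT_gen f a b (fun _ => 0)) as [c [_ Hc2]].
    + intros x Hx. apply is_derive_Reals. rewrite Rmin_left, Rmax_right in Hx by lra.
      apply Hd; auto.
    + intros x Hx. rewrite Rmin_left, Rmax_right in Hx by lra. auto.
    + lra.
  - destruct (classic (a < s < b)) as [Hs|Hs].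
    + transitivity (f s).
      * apply IH; try lra. intros; apply Hc; lra.
        intros t Ht Hn. apply Hd. lra. intros [E|E]; [lra|tauto].
      * apply IH; try lra. intros; apply Hc; lra.
        intros t Ht Hn. apply Hd. lra. intros [E|E]; [lra|tauto].
    + apply IH; auto. intros t Ht Hn. apply Hd; auto. intros [E|E]; [subst; tauto|tauto].
Qed.

Lemma CD_const_list (S : list R) (f : R -> C) a b : a <= b ->
  (forall t, a <= t <= b -> CC f t) ->
  (forall t, a < t < b -> ~ In t S -> CD f t 0%C) -> f a = f b.
Proof.
  intros Hab Hc Hd.
  assert (E1 : fst (f a) = fst (f b)).
  { apply (const_list S (fun s => fst (f s))); auto. intros; apply Hc; auto.
    intros; apply Hd; auto. }
  assert (E2 : snd (f a) = snd (f b)).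
  { apply (const_list S (fun s => snd (f s))); auto. intros; apply Hc; auto.
    intros; apply Hd; auto. }
  destruct (f a), (f b); simpl in *; subst; auto.
Qed.

Lemma Ceq (x y : C) : fst x = fst y -> snd x = snd y -> x = y.
Proof. destruct x, y; simpl; intros -> ->; auto. Qed.

Definition nsq (z : C) : R := fst z ^ 2 + snd z ^ 2.
Definition SU (a b : C) : Prop := nsq a - nsq b = 1.
Definition mob (a b z : C) : C := ((a * z + b) / (Cconj b * z + Cconj a))%C.

Lemma nsq_nonneg (z : C) : 0 <= nsq z.
Proof. unfold nsq; nra. Qed.

Lemma Cmod_nsq (z : C) : Cmod z = sqrt (nsq z).
Proof. reflexivity. Qed.

Lemma S1_nsq (z : C) : on_S1 z <-> nsq z = 1.
Proof.
  unfold on_S1. rewrite Cmod_nsq. split; intro H.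
  - rewrite <- (sqrt_sqrt (nsq z)) by apply nsq_nonneg. rewrite H; ring.
  - rewrite H; apply sqrt_1.
Qed.

Lemma Cmod2_nsq (z : C) : Cmod z ^ 2 = nsq z.
Proof. rewrite Cmod_nsq. apply pow2_sqrt, nsq_nonneg. Qed.

Lemma nsq_zero (z : C) : nsq z = 0 -> z = 0%C.
Proof. destruct z as [x y]; unfold nsq; simpl; intro. apply Ceq; simpl; nra. Qed.

Lemma nz_nsq (z : C) : z <> 0%C -> nsq z <> 0.
Proof. intros H E; apply H, nsq_zero, E. Qed.

Lemma nsq_mult (x y : C) : nsq (x * y)%C = nsq x * nsq y.
Proof. destruct x, y; unfold nsq; simpl; ring. Qed.
Lemma nsq_conj (x : C) : nsq (Cconj x) = nsq x.
Proof. destruct x; unfold nsq; simpl; ring. Qed.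

Lemma nsq_div (x y : C) : y <> 0%C -> nsq (x / y)%C = nsq x / nsq y.
Proof.
  intro H. pose proof (nz_nsq y H) as Hy. destruct x as [a b], y as [c d]; unfold nsq in *; simpl in *.
  field. nra.
Qed.

Lemma mob_den_nz (a b z : C) : SU a b -> nsq z = 1 -> (Cconj b * z + Cconj a)%C <> 0%C.
Proof.
  intros Hs Hz E. unfold SU, nsq in *.
  destruct a as [a1 a2], b as [b1 b2], z as [z1 z2].
  injection E; simpl; intros E2 E1.
  assert (a1 = -(b1*z1 + b2*z2)) by lra. assert (a2 = b1*z2 - b2*z1) by lra.
  simpl in *. subst. nra.
Qed.

Lemma mob_S1 (a b z : C) : SU a b -> nsq z = 1 -> nsq (mob a b z) = 1.
Proof.
  intros Hs Hz. unfold mob. rewrite nsq_div by (apply mob_den_nz; auto).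
  pose proof (mob_den_nz a b z Hs Hz) as Hd.
  assert (E : nsq (a * z + b)%C = nsq (Cconj b * z + Cconj a)%C).
  { unfold SU, nsq in *. destruct a as [a1 a2], b as [b1 b2], z as [z1 z2]; simpl in *. nra. }
  rewrite E. field. apply nz_nsq; auto.
Qed.

Lemma SU_mult (a1 b1 a2 b2 : C) : SU a1 b1 -> SU a2 b2 ->
  SU (a1 * a2 + b1 * Cconj b2)%C (a1 * b2 + b1 * Cconj a2)%C.
Proof.
  unfold SU, nsq; intros H1 H2.
  destruct a1 as [p q], b1 as [r s], a2 as [x y], b2 as [u v]; simpl in *.
  transitivity ((p ^ 2 + q ^ 2 - (r ^ 2 + s ^ 2)) * (x ^ 2 + y ^ 2 - (u ^ 2 + v ^ 2))).
  ring. simpl. rewrite H1, H2; ring.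
Qed.

Lemma mob_comp (a1 b1 a2 b2 z : C) : SU a1 b1 -> SU a2 b2 -> nsq z = 1 ->
  mob a1 b1 (mob a2 b2 z) = mob (a1 * a2 + b1 * Cconj b2)%C (a1 * b2 + b1 * Cconj a2)%C z.
Proof.
  intros H1 H2 Hz.
  pose proof (mob_den_nz _ _ _ H2 Hz) as D2.
  pose proof (mob_den_nz _ _ _ H1 (mob_S1 _ _ _ H2 Hz)) as D1.
  pose proof (mob_den_nz _ _ _ (SU_mult _ _ _ _ H1 H2) Hz) as D3.
  revert D1 D3. unfold mob.
  rewrite !Cplus_conj, !Cmult_conj, !Cconj_conj. intros D1 D3.
  assert (D1' : (Cconj b1 * (a2 * z + b2) + Cconj a1 * (Cconj b2 * z + Cconj a2))%C <> 0%C).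
  { intro E. apply D1.
    replace (Cconj b1 * ((a2 * z + b2) / (Cconj b2 * z + Cconj a2)) + Cconj a1)%C with
      ((Cconj b1 * (a2 * z + b2) + Cconj a1 * (Cconj b2 * z + Cconj a2)) / (Cconj b2 * z + Cconj a2))%C
      by (field; auto).
    rewrite E. field. auto. }
  field. repeat split; auto.
Qed.

Lemma mob_id (z : C) : mob 1%C 0%C z = z.
Proof. unfold mob. apply Ceq; destruct z; simpl; field. Qed.

Lemma mob_inv1 (a b z : C) : SU a b -> nsq z = 1 -> mob (Cconj a) (- b)%C (mob a b z) = z.
Proof.
  intros H Hz. assert (H' : SU (Cconj a) (- b)%C).
  { unfold SU in *. rewrite nsq_conj. destruct b; unfold nsq in *; simpl in *. lra. }
  rewrite mob_comp; auto.
  transitivity (mob (RtoC 1) (RtoC 0) z); [f_equal|apply mob_id].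
  - unfold SU, nsq in H. apply Ceq; destruct a, b; simpl in *; lra.
  - apply Ceq; destruct a, b; simpl; ring.
Qed.

Lemma mob_inv2 (a b z : C) : SU a b -> nsq z = 1 -> mob a b (mob (Cconj a) (- b)%C z) = z.
Proof.
  intros H Hz. assert (H' : SU (Cconj a) (- b)%C).
  { unfold SU in *. rewrite nsq_conj. destruct b; unfold nsq in *; simpl in *. lra. }
  rewrite mob_comp; auto.
  transitivity (mob (RtoC 1) (RtoC 0) z); [f_equal|apply mob_id].
  - unfold SU, nsq in H. apply Ceq; destruct a, b; simpl in *; lra.
  - apply Ceq; destruct a, b; simpl; ring.
Qed.

Lemma mob_neg (a b z : C) : SU a b -> nsq z = 1 -> mob (- a)%C (- b)%C z = mob a b z.
Proof.
  intros H Hz. pose proof (mob_den_nz _ _ _ H Hz) as D.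
  unfold mob in *. rewrite !Copp_conj.
  field. split; auto. intro E; apply D.
  replace (Cconj b * z + Cconj a)%C with (- (- Cconj b * z + - Cconj a))%C by ring.
  rewrite E; ring.
Qed.

Definition ric (al u : C) : C := (al - Cconj al * u * u)%C.
Definition alpha_of (l dg1 dg2 : R) : C := (dg1 / (2 * l), dg2 / (2 * l)).

Lemma ode_to_ric l (u : C) dg1 dg2 du1 du2 : 0 < l -> nsq u = 1 ->
  l * du1 = - snd u * (- dg1 * snd u + dg2 * fst u) ->
  l * du2 = fst u * (- dg1 * snd u + dg2 * fst u) ->
  ((du1, du2) : C) = ric (alpha_of l dg1 dg2) u.
Proof.
  intros Hl Hu E1 E2. unfold ric, alpha_of, nsq in *. destruct u as [x y]; simpl in *.
  apply Ceq; simpl.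
  - apply (Rmult_eq_reg_l l); [|lra]. rewrite E1. field_simplify; [|lra].
    assert (H1 : x ^ 2 = 1 - y ^ 2) by nra. rewrite H1. field.
  - apply (Rmult_eq_reg_l l); [|lra]. rewrite E2. field_simplify; [|lra].
    assert (H1 : x ^ 2 = 1 - y ^ 2) by nra. rewrite H1. field.
Qed.

Lemma ric_to_ode l (u : C) dg1 dg2 du1 du2 : 0 < l -> nsq u = 1 ->
  ((du1, du2) : C) = ric (alpha_of l dg1 dg2) u ->
  l * du1 = - snd u * (- dg1 * snd u + dg2 * fst u) /\
  l * du2 = fst u * (- dg1 * snd u + dg2 * fst u).
Proof.
  intros Hl Hu E. unfold ric, alpha_of, nsq in *. destruct u as [x y]; simpl in *.
  injection E; intros E2 E1. rewrite E1, E2.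
  assert (H1 : x ^ 2 = 1 - y ^ 2) by nra.
  split; field_simplify; try lra; rewrite H1; field; lra.
Qed.

Lemma mob_CD (a b : R -> C) (al z : C) t :
  CD a t (al * Cconj (b t))%C -> CD b t (al * Cconj (a t))%C ->
  (Cconj (b t) * z + Cconj (a t))%C <> 0%C ->
  CD (fun s => mob (a s) (b s) z) t (ric al (mob (a t) (b t) z)).
Proof.
  intros Ha Hb Hd. unfold mob.
  eapply CD_eq. apply CD_div; auto.
  - apply CD_plus. apply CD_mult. exact Ha. apply CD_const. exact Hb.
  - apply CD_plus. apply CD_mult. apply CD_conj; exact Hb. apply CD_const. apply CD_conj; exact Ha.
  - unfold ric. rewrite !Cmult_conj, !Cconj_conj. field. auto.
Qed.

Definition clamp (t : R) : R := Rmax 0 (Rmin t 1).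
Lemma clamp_id t : 0 <= t <= 1 -> clamp t = t.
Proof. intros; unfold clamp. rewrite Rmin_left by lra. rewrite Rmax_right; lra. Qed.
Lemma clamp_in t : 0 <= clamp t <= 1.
Proof. unfold clamp. unfold Rmax, Rmin. repeat destruct Rle_dec; lra. Qed.
Lemma clamp_lip s t : Rabs (clamp s - clamp t) <= Rabs (s - t).
Proof. unfold clamp, Rmax, Rmin. repeat destruct Rle_dec; unfold Rabs; repeat destruct Rcase_abs; lra. Qed.

Definition part (n : nat) (p : nat -> R) : Prop :=
  p 0%nat = 0 /\ p n = 1 /\ (forall i, (i < n)%nat -> p i < p (S i)).

Lemma part_mono n p : part n p -> forall i j, (i <= j <= n)%nat -> p i <= p j.
Proof.
  intros [H0 [H1 H2]] i j [Hij Hjn]. induction Hij. lra.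
  assert (p m < p (S m)) by (apply H2; lia). specialize (IHHij ltac:(lia)). lra.
Qed.

Lemma part_range n p : part n p -> forall i, (i <= n)%nat -> 0 <= p i <= 1.
Proof.
  intros Hp i Hi. destruct Hp as [H0 [H1 H2]] eqn:E. split.
  - rewrite <- H0. apply (part_mono n p Hp); lia.
  - rewrite <- H1. apply (part_mono n p Hp); lia.
Qed.

Lemma part_n_pos n p : part n p -> (0 < n)%nat.
Proof. intros [H0 [H1 _]]. destruct n; [rewrite H0 in H1; lra|lia]. Qed.

Lemma part_cover n p : part n p -> forall t, 0 <= t <= 1 ->
  exists i, (i < n)%nat /\ p i <= t <= p (S i).
Proof.
  intros Hp. pose proof (part_n_pos n p Hp) as Hn.
  destruct Hp as [H0 [H1 H2]] eqn:E.
  assert (K : forall k, (1 <= k <= n)%nat -> forall t, 0 <= t <= p k ->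
             exists i, (i < k)%nat /\ p i <= t <= p (S i)).
  { induction k as [|k IH]; intros Hk t Ht. lia.
    destruct (Nat.eq_dec k 0) as [->|Hk0].
    - exists 0%nat; split; [lia|lra].
    - destruct (Rle_dec t (p k)) as [Hle|Hgt].
      + destruct (IH ltac:(lia) t ltac:(lra)) as [i [Hi1 Hi2]]. exists i; split; [lia|auto].
      + exists k; split; [lia|lra]. }
  intros t Ht. apply (K n); [lia|lra].
Qed.

Definition pc (n : nat) (p : nat -> R) (f : R -> R) : Prop :=
  forall i, (i < n)%nat -> exists F : R -> R,
    (forall t, p i <= t <= p (S i) -> continuity_pt F t) /\
    (forall t, p i < t < p (S i) -> f t = F t).

Lemma cont_of_pt F t : continuity_pt F t -> continuous F t.
Proof. intro H; apply continuity_pt_filterlim; exact H. Qed.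

Lemma pc_exRInt n p f : part n p -> pc n p f -> forall t, 0 <= t <= 1 -> ex_RInt f 0 t.
Proof.
  intros Hp Hf. pose proof Hp as Hp'. destruct Hp' as [H0 [H1 H2]].
  assert (K : forall k, (k <= n)%nat -> forall t, 0 <= t <= p k -> ex_RInt f 0 t).
  { induction k as [|k IH]; intros Hk t Ht.
    - rewrite H0 in Ht. replace t with 0 by lra. apply ex_RInt_point.
    - destruct (Rle_dec t (p k)) as [Hle|Hgt].
      + apply IH; [lia|lra].
      + apply ex_RInt_Chasles with (p k).
        * apply IH; [lia|]. split; [|lra]. rewrite <- H0; apply (part_mono n p Hp); lia.
        * destruct (Hf k ltac:(lia)) as [F [HF1 HF2]].
          apply ex_RInt_ext with F.
          { intros x Hx. rewrite Rmin_left, Rmax_right in Hx by lra. symmetry; apply HF2; lra. }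
          apply (@ex_RInt_continuous R_CompleteNormedModule). intros z Hz. rewrite Rmin_left, Rmax_right in Hz by lra.
          apply cont_of_pt, HF1; lra. }
  intros t Ht. apply (K n); [lia|lra].
Qed.

Lemma pc_bound n p f : part n p -> pc n p f -> exists M, 0 <= M /\ forall t, 0 <= t <= 1 -> Rabs (f t) <= M.
Proof.
  intros Hp Hf. pose proof Hp as Hp'. destruct Hp' as [H0 [H1 H2]].
  assert (K : forall k, (k <= n)%nat -> exists M, 0 <= M /\ forall t, 0 <= t <= p k -> Rabs (f t) <= M).
  { induction k as [|k IH]; intros Hk.
    - exists (Rabs (f 0)). split. apply Rabs_pos. intros t Ht. rewrite H0 in Ht. replace t with 0 by lra. lra.
    - destruct (IH ltac:(lia)) as [M [HM0 HM]].
      destruct (Hf k ltac:(lia)) as [F [HF1 HF2]].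
      destruct (continuity_ab_maj (fun x => Rabs (F x)) (p k) (p (S k))) as [Mx [HMx1 HMx2]].
      { apply Rlt_le, H2; lia. }
      { intros c Hc. apply ccomp. apply HF1; auto. apply Rcontinuity_abs. }
      exists (Rmax M (Rmax (Rabs (F Mx)) (Rabs (f (p (S k)))))).
      split. apply Rle_trans with M; auto; apply Rmax_l.
      intros t Ht.
      destruct (Rle_dec t (p k)) as [Hle|Hgt].
      + apply Rle_trans with M. apply HM; lra. apply Rmax_l.
      + destruct (Req_dec t (p (S k))) as [Heq|Hne].
        * rewrite Heq. eapply Rle_trans; [|apply Rmax_r]. apply Rmax_r.
        * rewrite HF2 by lra. eapply Rle_trans; [|apply Rmax_r].
          eapply Rle_trans; [|apply Rmax_l]. apply HMx1; lra. }
  rewrite <- H1. apply (K n). lia.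
Qed.

Lemma lip_cont (I : R -> R) M : 0 <= M -> (forall s t, Rabs (I s - I t) <= M * Rabs (s - t)) ->
  forall t, continuity_pt I t.
Proof.
  intros HM H t. unfold continuity_pt, continue_in, limit1_in, limit_in. intros eps Heps.
  exists (eps / (M + 1)). split. apply Rdiv_lt_0_compat; lra.
  intros x [_ Hx]. simpl in *. unfold Rdist in *.
  eapply Rle_lt_trans. apply H.
  apply Rle_lt_trans with (M * (eps / (M+1))). apply Rmult_le_compat_l; lra.
  apply Rlt_le_trans with ((M + 1) * (eps / (M+1))). apply Rmult_lt_compat_r.
  apply Rdiv_lt_0_compat; lra. lra. right; field; lra.
Qed.

Definition RI (f : R -> R) (a b : R) : R := RInt f a b.

Lemma pc_I n p f : part n p -> pc n p f ->
  (forall t, continuity_pt (fun s => RI f 0 (clamp s)) t) /\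
  RI f 0 (clamp 0) = 0 /\
  (forall t, 0 < t < 1 -> (forall i, (i <= n)%nat -> t <> p i) ->
     derivable_pt_lim (fun s => RI f 0 (clamp s)) t (f t)).
Proof.
  unfold RI.
  intros Hp Hf.
  pose proof (pc_exRInt n p f Hp Hf) as Hex.
  destruct (pc_bound n p f Hp Hf) as [M [HM0 HM]].
  split; [|split].
  - apply lip_cont with M; auto.
    assert (L : forall x y, 0 <= y /\ y <= x /\ x <= 1 -> Rabs (RInt f 0 x - RInt f 0 y) <= M * Rabs (x - y)).
    { intros x y Hxy.
      assert (Ey : ex_RInt f 0 y) by (apply Hex; lra).
      assert (Eyx : ex_RInt f y x) by (apply (@ex_RInt_Chasles_2 R_CompleteNormedModule) with 0; [lra|apply Hex; lra]).
      assert (E : RInt f 0 y + RInt f y x = RInt f 0 x) by exact (@RInt_Chasles R_CompleteNormedModule f 0 y x Ey Eyx).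
      replace (RInt f 0 x - RInt f 0 y) with (RInt f y x) by lra.
      rewrite (Rabs_right (x - y)) by lra. rewrite Rmult_comm.
      apply abs_RInt_le_const; auto. lra. intros; apply HM; lra. }
    intros s t. pose proof (clamp_in s). pose proof (clamp_in t). pose proof (clamp_lip s t).
    destruct (Rle_dec (clamp t) (clamp s)).
    + eapply Rle_trans. apply L; lra. apply Rmult_le_compat_l; auto.
    + rewrite Rabs_minus_sym. eapply Rle_trans. apply L; lra.
      rewrite Rabs_minus_sym. apply Rmult_le_compat_l; auto.
  - rewrite clamp_id by lra. exact (@RInt_point R_CompleteNormedModule 0 f).
  - intros t Ht Hnp.
    destruct (part_cover n p Hp t ltac:(lra)) as [i [Hi Hti]].
    assert (Hti' : p i < t < p (S i)).
    { split; destruct Hti as [Ha Hb]; [destruct Ha as [Ha|Ha]|destruct Hb as [Hb|Hb]]; auto;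
      [exfalso; apply (Hnp i); [lia|auto] | exfalso; apply (Hnp (S i)); [lia|auto]]. }
    pose proof (part_range n p Hp i ltac:(lia)) as R1.
    pose proof (part_range n p Hp (S i) ltac:(lia)) as R2.
    destruct (Hf i Hi) as [F [HF1 HF2]].
    apply is_derive_Reals.
    apply is_derive_ext_loc with (fun s => RInt f 0 s).
    { apply locally_interval with (Finite (p i)) (Finite (p (S i))); simpl; try lra.
      intros y Hy1 Hy2. rewrite clamp_id; auto; lra. }
    apply (is_derive_RInt f (fun s => RInt f 0 s) 0 t).
    { apply locally_interval with (Finite (p i)) (Finite (p (S i))); simpl; try lra.
      intros y Hy1 Hy2. apply (@RInt_correct R_CompleteNormedModule), Hex; lra. }
    apply continuous_ext_loc with F.
    { apply locally_interval with (Finite (p i)) (Finite (p (S i))); simpl; try lra.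
      intros y Hy1 Hy2. symmetry; apply HF2; lra. }
    apply cont_of_pt, HF1; lra.
Qed.

Definition pieces (gamma : R -> C) (n : nat) (p : nat -> R) : Prop :=
  forall i, (i < n)%nat ->
    C1_on (fun t => fst (gamma t)) (p i) (p (S i)) /\
    C1_on (fun t => snd (gamma t)) (p i) (p (S i)).

Definition alG (l : R) (gamma : R -> C) (s : R) : C :=
  alpha_of l (Derive (fun r => fst (gamma r)) s) (Derive (fun r => snd (gamma r)) s).

Lemma motion_CC l gamma u : prytz_motion l gamma u -> forall t, 0 <= t <= 1 -> CC u t.
Proof. intros [_ [H _]] t Ht. apply H; auto. Qed.

Lemma motion_unit l gamma u : prytz_motion l gamma u -> forall t, 0 <= t <= 1 -> nsq (u t) = 1.
Proof. intros [H _] t Ht. apply S1_nsq. apply H; auto. Qed.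

Lemma motion_ric l gamma u : 0 < l -> prytz_motion l gamma u ->
  exists S : list R, forall t, 0 < t < 1 -> ~ In t S -> CD u t (ric (alG l gamma t) (u t)).
Proof.
  intros Hl Hm. pose proof (motion_unit _ _ _ Hm) as Hu.
  destruct Hm as [_ [_ [S HS]]]. exists S. intros t Ht Hn.
  destruct (HS t Ht Hn) as [dg1 [dg2 [du1 [du2 [H1 [H2 [H3 [H4 [E1 E2]]]]]]]]].
  unfold alG. rewrite (is_derive_unique _ _ dg1) by (apply is_derive_Reals; exact H1).
  rewrite (is_derive_unique _ _ dg2) by (apply is_derive_Reals; exact H2).
  apply CD_eq with (du1, du2). split; auto.
  apply ode_to_ric; auto. apply Hu; lra.
Qed.

Lemma notin_app (t : R) l1 l2 : ~ In t (l1 ++ l2) -> ~ In t l1 /\ ~ In t l2.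
Proof. intros H; split; intro E; apply H; apply in_or_app; auto. Qed.

Lemma notin_parts (t : R) n p : ~ In t (map p (seq 0 (S n))) -> forall i, (i <= n)%nat -> t <> p i.
Proof.
  intros H i Hi E. apply H. apply in_map_iff. exists i; split; auto. apply in_seq. lia.
Qed.

Lemma lift_exists l gamma n p u : 0 < l -> part n p -> pieces gamma n p ->
  (forall t, 0 <= t <= 1 -> CC u t) ->
  exists q : R -> C, (forall t, CC q t) /\ q 0 = RtoC 1 /\
    (forall t, 0 < t < 1 -> (forall i, (i <= n)%nat -> t <> p i) ->
       CD q t (q t * (Cconj (alG l gamma t) * u t))%C).
Proof.
  intros Hl Hp Hpc Hu.
  set (h := fun s => (Cconj (alG l gamma s) * u s)%C).
  assert (Hpcc : forall i, (i < n)%nat -> exists FC : R -> C,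
            (forall t, p i <= t <= p (S i) -> CC FC t) /\
            (forall t, p i < t < p (S i) -> h t = FC t)).
  { intros i Hi. destruct (Hpc i Hi) as [[g1 [Hg1 [Hg1c Hg1e]]] [g2 [Hg2 [Hg2c Hg2e]]]].
    pose proof (part_range n p Hp i ltac:(lia)) as R1.
    pose proof (part_range n p Hp (S i) ltac:(lia)) as R2.
    exists (fun s => Cconj (alpha_of l (Derive g1 s) (Derive g2 s)) * u s)%C. split.
    - intros t Ht. apply CC_mult. apply CC_conj. split; simpl; apply cdiv; auto; try apply cconst; lra.
      apply Hu; lra.
    - intros t Ht. unfold h, alG. f_equal. f_equal. f_equal.
      + apply Derive_ext_loc.
        apply locally_interval with (Finite (p i)) (Finite (p (S i))); simpl; try lra.
        intros y Hy1 Hy2. apply Hg1e; lra.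
      + apply Derive_ext_loc.
        apply locally_interval with (Finite (p i)) (Finite (p (S i))); simpl; try lra.
        intros y Hy1 Hy2. apply Hg2e; lra. }
  assert (PR : pc n p (fun s => fst (h s))).
  { intros i Hi. destruct (Hpcc i Hi) as [FC [H1 H2]]. exists (fun s => fst (FC s)). split.
    intros; apply H1; auto. intros t Ht; rewrite H2; auto. }
  assert (PI : pc n p (fun s => snd (h s))).
  { intros i Hi. destruct (Hpcc i Hi) as [FC [H1 H2]]. exists (fun s => snd (FC s)). split.
    intros; apply H1; auto. intros t Ht; rewrite H2; auto. }
  destruct (pc_I n p _ Hp PR) as [CR [ZR DR]].
  destruct (pc_I n p _ Hp PI) as [CI [ZI DI]].
  set (IR := fun s => RI (fun s => fst (h s)) 0 (clamp s)) in *.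
  set (II := fun s => RI (fun s => snd (h s)) 0 (clamp s)) in *.
  exists (fun s => (exp (IR s) * cos (II s), exp (IR s) * sin (II s))). split; [|split].
  - intros t. split; simpl; apply cmult; apply ccomp; auto;
      try apply derivable_continuous_pt, derivable_pt_exp; try apply continuity_cos; try apply continuity_sin.
  - unfold IR, II in *. rewrite ZR, ZI, exp_0, cos_0, sin_0. apply Ceq; simpl; ring.
  - intros t Ht Hnp.
    pose proof (DR t Ht Hnp) as D1. pose proof (DI t Ht Hnp) as D2. fold IR II in D1, D2.
    split; simpl.
    + eapply dpl_eq. apply dmult. apply dcomp. exact D1. apply derivable_pt_lim_exp.
      apply dcomp. exact D2. apply derivable_pt_lim_cos. cbv beta; unfold h; simpl; ring.
    + eapply dpl_eq. apply dmult. apply dcomp. exact D1. apply derivable_pt_lim_exp.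
      apply dcomp. exact D2. apply derivable_pt_lim_sin. cbv beta; unfold h; simpl; ring.
Qed.

Lemma RtoC2_nz : RtoC 2 <> 0%C.
Proof. intro E; injection E; lra. Qed.

Lemma inv_phi (a b u z : C) :
  (a - b * u)%C <> 0%C -> (b * z + Cconj a)%C <> 0%C ->
  ((Cconj a * u - Cconj b) / (a - b * u))%C = z ->
  u = ((a * z + Cconj b) / (b * z + Cconj a))%C.
Proof.
  intros D1 D2 E.
  assert (E' : (Cconj a * u - Cconj b)%C = (z * (a - b * u))%C) by (rewrite <- E; field; auto).
  assert (X : (a * z + Cconj b)%C = (u * (b * z + Cconj a))%C).
  { replace (Cconj b) with (Cconj a * u - z * (a - b * u))%C by (rewrite <- E'; ring). ring. }
  rewrite X. field. auto.
Qed.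

Lemma G_sub_M l gamma f : 0 < l -> piecewise_C1 gamma ->
  (forall z, on_S1 z -> prytz_transfer l gamma z (f z)) -> mobius_S1 f.
Proof.
  intros Hl [n [p [H0 [H1 [H2 H3]]]]] Hf.
  assert (Hp : part n p) by (split; [|split]; auto).
  assert (Hpc : pieces gamma n p) by exact H3.
  set (al := alG l gamma) in *.
  assert (S1one : on_S1 (RtoC 1)) by (apply S1_nsq; unfold nsq; simpl; ring).
  assert (S1mone : on_S1 (RtoC (-1))) by (apply S1_nsq; unfold nsq; simpl; ring).
  destruct (Hf _ S1one) as [u1 [M1 [U10 U11]]].
  destruct (Hf _ S1mone) as [u2 [M2 [U20 U21]]].
  destruct (motion_ric l gamma u1 Hl M1) as [S1 R1].
  destruct (motion_ric l gamma u2 Hl M2) as [S2 R2].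
  destruct (lift_exists l gamma n p u1 Hl Hp Hpc (motion_CC _ _ _ M1)) as [q1 [Q1c [Q10 Q1d]]].
  destruct (lift_exists l gamma n p u2 Hl Hp Hpc (motion_CC _ _ _ M2)) as [q2 [Q2c [Q20 Q2d]]].
  pose proof (motion_CC _ _ _ M1) as C1. pose proof (motion_CC _ _ _ M2) as C2.
  set (A := fun s => ((u1 s * q1 s - u2 s * q2 s) / RtoC 2)%C).
  set (B := fun s => ((q1 s - q2 s) / RtoC 2)%C).
  set (L := S1 ++ S2 ++ map p (seq 0 (S n))).
  assert (Good : forall t, 0 < t < 1 -> ~ In t L ->
            CD A t (al t * B t)%C /\ CD B t (Cconj (al t) * A t)%C).
  { intros t Ht HL. apply notin_app in HL as [HL1 HL]. apply notin_app in HL as [HL2 HL3].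
    pose proof (notin_parts _ _ _ HL3) as HP.
    pose proof (R1 t Ht HL1) as D1. pose proof (R2 t Ht HL2) as D2.
    pose proof (Q1d t Ht HP) as E1. pose proof (Q2d t Ht HP) as E2.
    pose proof RtoC2_nz as N2.
    split.
    - unfold A. eapply CD_eq. apply CD_div; auto.
      apply CD_minus; apply CD_mult; eauto. apply CD_const.
      unfold B, ric, al. cbv beta. field. auto.
    - unfold B. eapply CD_eq. apply CD_div; auto.
      apply CD_minus; eauto. apply CD_const.
      unfold A, ric, al. cbv beta. field. }
  assert (CCA : forall t, 0 <= t <= 1 -> CC A t).
  { intros t Ht. unfold A. apply CC_div. apply RtoC2_nz.
    apply CC_minus; apply CC_mult; auto. apply CC_const. }
  assert (CCB : forall t, 0 <= t <= 1 -> CC B t).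
  { intros t Ht. unfold B. apply CC_div. apply RtoC2_nz.
    apply CC_minus; auto. apply CC_const. }
  assert (A0 : A 0 = RtoC 1).
  { unfold A. rewrite U10, U20, Q10, Q20. apply Ceq; simpl; field. }
  assert (B0 : B 0 = RtoC 0).
  { unfold B. rewrite Q10, Q20. apply Ceq; simpl; field. }
  set (K := fun s => (A s * Cconj (A s) - B s * Cconj (B s))%C).
  assert (KK : forall t, 0 <= t <= 1 -> K t = K 0).
  { intros t Ht. symmetry. apply (CD_const_list L K 0 t); try lra.
    - intros s Hs. unfold K. apply CC_minus; apply CC_mult; try apply CC_conj; first [apply CCA | apply CCB]; lra.
    - intros s Hs HL. destruct (Good s ltac:(lra) HL) as [GA GB].
      unfold K. eapply CD_eq. apply CD_minus; apply CD_mult; eauto; apply CD_conj; eauto.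
      rewrite !Cmult_conj, !Cconj_conj. ring. }
  assert (SUt : forall t, 0 <= t <= 1 -> nsq (A t) - nsq (B t) = 1).
  { intros t Ht. pose proof (f_equal fst (KK t Ht)) as E.
    assert (E2 : fst (K t) = 1).
    { rewrite E. unfold K. rewrite A0, B0. simpl. ring. }
    rewrite <- E2. unfold K. destruct (A t), (B t); unfold nsq; simpl; ring. }
  assert (Dnz : forall t (w : C), 0 <= t <= 1 -> nsq w = 1 -> (A t - B t * w)%C <> 0%C).
  { intros t w Ht Hw E. assert (A t = (B t * w)%C).
    { replace (A t) with ((A t - B t * w) + B t * w)%C by ring. rewrite E. ring. }
    pose proof (SUt t Ht) as K1. rewrite H, nsq_mult, Hw in K1. lra. }
  exists (A 1), (Cconj (B 1)). split.
  - rewrite !Cmod2_nsq, nsq_conj. apply SUt; lra.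
  - intros z Hz. destruct (Hf z Hz) as [uz [Mz [Uz0 Uz1]]]. rewrite <- Uz1.
    destruct (motion_ric _ _ uz Hl Mz) as [Sz Rz].
    pose proof (motion_CC _ _ _ Mz) as Cz. pose proof (motion_unit _ _ _ Mz) as Nz.
    set (phi := fun s => ((Cconj (A s) * uz s - Cconj (B s)) / (A s - B s * uz s))%C).
    assert (P0 : phi 0 = z).
    { unfold phi. rewrite A0, B0, Uz0. apply Ceq; destruct z; simpl; field. }
    assert (P1 : phi 0 = phi 1).
    { apply (CD_const_list (L ++ Sz) phi 0 1); try lra.
      - intros s Hs. unfold phi. apply CC_div. apply Dnz; auto.
        apply CC_minus. apply CC_mult; auto. apply CC_conj; auto. apply CC_conj; auto.
        apply CC_minus; auto. apply CC_mult; auto.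
      - intros s Hs HL. apply notin_app in HL as [HL HLz].
        destruct (Good s Hs HL) as [GA GB]. pose proof (Rz s Hs HLz) as Du.
        assert (Dn : (A s - B s * uz s)%C <> 0%C) by (apply Dnz; [lra|apply Nz; lra]).
        unfold phi. eapply CD_eq. apply CD_div; auto.
        apply CD_minus. apply CD_mult; eauto. apply CD_conj; eauto. apply CD_conj; eauto.
        apply CD_minus; eauto. apply CD_mult; eauto.
        unfold ric, al in *. cbv beta. rewrite !Cmult_conj, !Cconj_conj. field. auto. }
    assert (HzS : nsq z = 1) by (apply S1_nsq; auto).
    assert (SU1 : SU (A 1) (Cconj (B 1))) by (unfold SU; rewrite nsq_conj; apply SUt; lra).
    pose proof (mob_den_nz _ _ _ SU1 HzS) as DD. rewrite Cconj_conj in DD |- *.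
    apply inv_phi; auto. apply Dnz; [lra|apply Nz; lra].
    rewrite <- P0, P1. reflexivity.
Qed.

Lemma cosh_sinh x : cosh x ^ 2 - sinh x ^ 2 = 1.
Proof.
  unfold cosh, sinh. assert (E : exp x * exp (- x) = 1).
  { rewrite <- exp_plus. replace (x + - x) with 0 by ring. apply exp_0. }
  field_simplify. nra.
Qed.

Lemma d_lin s t : derivable_pt_lim (fun r => s * r) t s.
Proof. eapply dpl_eq. apply dmult. apply dconst. apply derivable_pt_lim_id. cbv beta; ring. Qed.

Lemma CD_lin (K : R) (e : C) t : CD (fun r => (RtoC (r * K) * e)%C) t (RtoC K * e)%C.
Proof.
  eapply CD_eq. apply CD_mult. apply CD_real.
  eapply dpl_eq. apply dmult. apply derivable_pt_lim_id. apply dconst. reflexivity.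
  apply CD_const. apply Ceq; simpl; ring.
Qed.

Lemma C1_lin (K : R) (e : C) a b :
  C1_on (fun t => fst (RtoC (t * K) * e)%C) a b /\ C1_on (fun t => snd (RtoC (t * K) * e)%C) a b.
Proof.
  split.
  - exists (fun t => fst (RtoC (t * K) * e)%C). repeat split; auto.
    + intros t. exists (fst (RtoC K * e)%C). apply is_derive_Reals. apply (CD_lin K e t).
    + intros t. apply cext with (fun _ => fst (RtoC K * e)%C). intros r.
      symmetry. apply is_derive_unique. apply is_derive_Reals. apply (CD_lin K e r). apply cconst.
  - exists (fun t => snd (RtoC (t * K) * e)%C). repeat split; auto.
    + intros t. exists (snd (RtoC K * e)%C). apply is_derive_Reals. apply (CD_lin K e t).
    + intros t. apply cext with (fun _ => snd (RtoC K * e)%C). intros r.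
      symmetry. apply is_derive_unique. apply is_derive_Reals. apply (CD_lin K e r). apply cconst.
Qed.

Lemma lin_pc1 (K : R) (e : C) : piecewise_C1 (fun t => (RtoC (t * K) * e)%C).
Proof.
  exists 1%nat, INR. simpl. split; [reflexivity|split; [reflexivity|split]].
  - intros i Hi. assert (i = 0%nat) by lia. subst. simpl. lra.
  - intros i Hi. apply C1_lin.
Qed.

Lemma SU_boost s e : nsq e = 1 -> SU (RtoC (cosh s)) (RtoC (sinh s) * e)%C.
Proof.
  intro He. unfold SU. rewrite nsq_mult, He. unfold nsq; simpl.
  pose proof (cosh_sinh s). nra.
Qed.

Lemma boost_G l s (e : C) : 0 < l -> nsq e = 1 ->
  prytz_group l (fun z => mob (RtoC (cosh s)) (RtoC (sinh s) * e)%C z).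
Proof.
  intros Hl He.
  set (K := 2 * l * s).
  exists (fun t => (RtoC (t * K) * e)%C). split. apply lin_pc1.
  intros z Hz. apply S1_nsq in Hz.
  set (a := fun t => RtoC (cosh (s * t))). set (b := fun t => (RtoC (sinh (s * t)) * e)%C).
  assert (SUt : forall t, SU (a t) (b t)) by (intros; apply SU_boost; auto).
  exists (fun t => mob (a t) (b t) z). split; [|split].
  - split; [|split].
    + intros t _. apply S1_nsq. apply mob_S1; auto.
    + intros t _. assert (CCu : CC (fun t => mob (a t) (b t) z) t).
      { unfold mob. apply CC_div. apply mob_den_nz; auto.
        - apply CC_plus. apply CC_mult. apply CC_real. apply ccomp. apply derivable_continuous_pt.
          exists (s). apply d_lin. apply derivable_continuous_pt. exists (sinh (s*t)). apply derivable_pt_lim_cosh.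
          apply CC_const. unfold b. apply CC_mult. apply CC_real. apply ccomp. apply derivable_continuous_pt.
          exists (s). apply d_lin. apply derivable_continuous_pt. exists (cosh (s*t)). apply derivable_pt_lim_sinh.
          apply CC_const.
        - apply CC_plus. apply CC_mult. apply CC_conj. unfold b. apply CC_mult. apply CC_real. apply ccomp. apply derivable_continuous_pt.
          exists (s). apply d_lin. apply derivable_continuous_pt. exists (cosh (s*t)). apply derivable_pt_lim_sinh.
          apply CC_const. apply CC_const. apply CC_conj. apply CC_real. apply ccomp. apply derivable_continuous_pt.
          exists (s). apply d_lin. apply derivable_continuous_pt. exists (sinh (s*t)). apply derivable_pt_lim_cosh. }
      exact CCu.
    + exists nil. intros t Ht _.
      set (al := alpha_of l (fst (RtoC K * e)%C) (snd (RtoC K * e)%C)).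
      assert (Hal : al = (RtoC s * e)%C).
      { unfold al, alpha_of, K. apply Ceq; simpl; field; lra. }
      assert (Da : CD a t (al * Cconj (b t))%C).
      { unfold a. eapply CD_eq. apply CD_real. apply dcomp. apply d_lin. apply derivable_pt_lim_cosh.
        rewrite Hal. unfold b. unfold nsq in He; destruct e as [e1 e2]; simpl in He.
        apply Ceq; simpl.
        - transitivity (sinh (s*t) * s * (e1*(e1*1)+e2*(e2*1))). rewrite He; ring. ring.
        - ring. }
      assert (Db : CD b t (al * Cconj (a t))%C).
      { unfold b. eapply CD_eq. apply CD_mult. apply CD_real. apply dcomp. apply d_lin. apply derivable_pt_lim_sinh.
        apply CD_const. rewrite Hal. unfold a. apply Ceq; destruct e as [e1 e2]; simpl; ring. }
      pose proof (mob_CD a b al z t Da Db (mob_den_nz _ _ _ (SUt t) Hz)) as Du.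
      pose proof (CD_lin K e t) as Dg.
      set (r := ric al (mob (a t) (b t) z)) in *.
      exists (fst (RtoC K * e)%C), (snd (RtoC K * e)%C), (fst r), (snd r).
      destruct Dg as [Dg1 Dg2]. destruct Du as [Du1 Du2].
      split; [exact Dg1|split; [exact Dg2|split; [exact Du1|split; [exact Du2|]]]].
      apply ric_to_ode; auto. apply mob_S1; auto.
  - unfold a, b. rewrite Rmult_0_r, cosh_0, sinh_0.
    replace (RtoC 0 * e)%C with (RtoC 0) by (apply Ceq; simpl; ring). apply mob_id.
  - unfold a, b. rewrite Rmult_1_r. reflexivity.
Qed.

Lemma C1_on_ext f f' a b : (forall t, a <= t <= b -> f t = f' t) -> C1_on f a b -> C1_on f' a b.
Proof.
  intros E [g [H1 [H2 H3]]]. exists g. split; auto. split; auto.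
  intros t Ht. rewrite <- E; auto.
Qed.

Lemma d_aff k m t : derivable_pt_lim (fun r => k * r + m) t k.
Proof. eapply dpl_eq. apply dplus. apply dmult. apply dconst. apply derivable_pt_lim_id. apply dconst. cbv beta; ring. Qed.

Lemma C1_affine h a b k m c a' b' : C1_on h a b ->
  (forall t, a' <= t <= b' -> a <= k * t + m <= b) ->
  C1_on (fun t => h (k * t + m) + c) a' b'.
Proof.
  intros [g [H1 [H2 H3]]] Hr.
  assert (D : forall t, derivable_pt_lim (fun r => g (k * r + m) + c) t (Derive g (k * t + m) * k)).
  { intros t. eapply dpl_eq. apply dplus. apply dcomp. apply d_aff.
    apply is_derive_Reals. apply Derive_correct. apply H1. apply dconst. ring. }
  exists (fun t => g (k * t + m) + c). split; [|split].
  - intros t. exists (Derive g (k * t + m) * k). apply is_derive_Reals. apply D.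
  - intros t. apply cext with (fun r => Derive g (k * r + m) * k).
    intros r. symmetry. apply is_derive_unique. apply is_derive_Reals. apply D.
    apply cmult. apply ccomp. apply derivable_continuous_pt. exists k. apply d_aff. apply H2. apply cconst.
  - intros t Ht. rewrite H3; auto.
Qed.

Lemma glue_cont (F G : R -> R) c t : (t <= c -> continuity_pt F t) -> (c <= t -> continuity_pt G t) ->
  F c = G c -> continuity_pt (fun s => if Rle_dec s c then F s else G s) t.
Proof.
  intros HF HG E.
  destruct (Rtotal_order t c) as [Hlt|[Heq|Hgt]].
  - apply continuity_pt_locally_ext with F (c - t). lra.
    intros y Hy. unfold Rdist in Hy. destruct (Rle_dec y c); auto. exfalso.
    apply Rabs_def2 in Hy. lra. apply HF; lra.
  - subst t. pose proof (HF (Rle_refl c)) as C1. pose proof (HG (Rle_refl c)) as C2.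
    unfold continuity_pt, continue_in, limit1_in, limit_in in *. intros eps Heps.
    destruct (C1 eps Heps) as [d1 [Hd1 P1]]. destruct (C2 eps Heps) as [d2 [Hd2 P2]].
    exists (Rmin d1 d2). split. apply Rmin_pos; lra.
    intros x [Hx1 Hx2]. simpl in *. unfold Rdist in *.
    destruct (Rle_dec c c) as [_|N]; [|lra].
    destruct (Rle_dec x c).
    + apply P1. split. exact Hx1. eapply Rlt_le_trans. exact Hx2. apply Rmin_l.
    + rewrite E. apply P2. split. exact Hx1. eapply Rlt_le_trans. exact Hx2. apply Rmin_r.
  - apply continuity_pt_locally_ext with G (t - c). lra.
    intros y Hy. unfold Rdist in Hy. destruct (Rle_dec y c); auto. exfalso.
    apply Rabs_def2 in Hy. lra. apply HG; lra.
Qed.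

Lemma dpl_loc f g t l a b : a < t < b -> (forall s, a < s < b -> f s = g s) ->
  derivable_pt_lim f t l -> derivable_pt_lim g t l.
Proof.
  intros Ht E H. apply is_derive_Reals. apply is_derive_ext_loc with f.
  apply locally_interval with (Finite a) (Finite b); simpl; try lra. intros; apply E; lra.
  apply is_derive_Reals; auto.
Qed.

Definition gcat (gg gf : R -> C) (t : R) : C :=
  if Rle_dec t (1/2) then gg (2 * t) else Cplus (gf (2 * t - 1)) (Cminus (gg 1) (gf 0)).

Lemma pc_cat gg gf : piecewise_C1 gg -> piecewise_C1 gf -> piecewise_C1 (gcat gg gf).
Proof.
  intros [ng [pg [Hg0 [Hg1 [Hg2 Hg3]]]]] [nf [pf [Hf0 [Hf1 [Hf2 Hf3]]]]].
  assert (Pg : part ng pg) by (split; auto). assert (Pf : part nf pf) by (split; auto).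
  pose proof (part_n_pos _ _ Pf) as Hnf.
  set (p := fun i => if (i <=? ng)%nat then pg i / 2 else (1 + pf (i - ng)%nat) / 2).
  assert (PL : forall i, (i <= ng)%nat -> p i = pg i / 2).
  { intros i Hi. unfold p. apply Nat.leb_le in Hi. rewrite Hi. auto. }
  assert (PR : forall i, (ng <= i)%nat -> p i = (1 + pf (i - ng)%nat) / 2).
  { intros i Hi. unfold p. destruct (i <=? ng)%nat eqn:E.
    - apply Nat.leb_le in E. assert (i = ng) by lia. subst. replace (ng - ng)%nat with 0%nat by lia.
      rewrite Hf0, Hg1. lra.
    - auto. }
  exists (ng + nf)%nat, p. split; [|split; [|split]].
  - rewrite PL by lia. rewrite Hg0; lra.
  - rewrite PR by lia. replace (ng + nf - ng)%nat with nf by lia. rewrite Hf1; lra.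
  - intros i Hi. destruct (Nat.lt_ge_cases i ng) as [Hl|Hr].
    + rewrite !PL by lia. pose proof (Hg2 i Hl). lra.
    + rewrite !PR by lia. replace (S i - ng)%nat with (S (i - ng)) by lia.
      pose proof (Hf2 (i - ng)%nat ltac:(lia)). lra.
  - intros i Hi. destruct (Nat.lt_ge_cases i ng) as [Hl|Hr].
    + rewrite !PL by lia. destruct (Hg3 i Hl) as [C1 C2].
      pose proof (part_range _ _ Pg i ltac:(lia)). pose proof (part_range _ _ Pg (S i) ltac:(lia)).
      split.
      * apply C1_on_ext with (fun t => fst (gg (2 * t + 0)) + 0).
        { intros t Ht. unfold gcat. destruct (Rle_dec t (1/2)); [|lra].
          replace (2 * t + 0) with (2 * t) by ring. ring. }
        apply (C1_affine (fun t => fst (gg t)) (pg i) (pg (S i))); auto. intros; lra.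
      * apply C1_on_ext with (fun t => snd (gg (2 * t + 0)) + 0).
        { intros t Ht. unfold gcat. destruct (Rle_dec t (1/2)); [|lra].
          replace (2 * t + 0) with (2 * t) by ring. ring. }
        apply (C1_affine (fun t => snd (gg t)) (pg i) (pg (S i))); auto. intros; lra.
    + rewrite !PR by lia. replace (S i - ng)%nat with (S (i - ng)) by lia.
      set (j := (i - ng)%nat). assert (Hj : (j < nf)%nat) by (unfold j; lia).
      destruct (Hf3 j Hj) as [C1 C2].
      pose proof (part_range _ _ Pf j ltac:(lia)). pose proof (part_range _ _ Pf (S j) ltac:(lia)).
      assert (Ejoin : forall t, (1 + pf j) / 2 <= t <= (1 + pf (S j)) / 2 ->
                gcat gg gf t = Cplus (gf (2 * t + -1)) (Cminus (gg 1) (gf 0))).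
      { intros t Ht. unfold gcat. replace (2 * t + -1) with (2 * t - 1) by ring.
        destruct (Rle_dec t (1/2)); auto.
        assert (t = 1/2) by lra. subst t. replace (2 * (1/2)) with 1 by field. replace (1 - 1) with 0 by ring.
        ring. }
      split.
      * apply C1_on_ext with (fun t => fst (gf (2 * t + -1)) + fst (Cminus (gg 1) (gf 0))).
        { intros t Ht. rewrite Ejoin; auto. }
        apply (C1_affine (fun t => fst (gf t)) (pf j) (pf (S j))); auto. intros; lra.
      * apply C1_on_ext with (fun t => snd (gf (2 * t + -1)) + snd (Cminus (gg 1) (gf 0))).
        { intros t Ht. rewrite Ejoin; auto. }
        apply (C1_affine (fun t => snd (gf t)) (pf j) (pf (S j))); auto. intros; lra.
Qed.

Lemma d_lin2 t : derivable_pt_lim (fun r => 2 * r) t 2.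
Proof. eapply dpl_eq. apply dmult. apply dconst. apply derivable_pt_lim_id. cbv beta; ring. Qed.

Lemma d_aff2 t : derivable_pt_lim (fun r => 2 * r - 1) t 2.
Proof. eapply dpl_eq. apply dminus. apply d_lin2. apply dconst. ring. Qed.

Lemma concat_G l f g : 0 < l -> prytz_group l f -> prytz_group l g ->
  prytz_group l (fun z => f (g z)).
Proof.
  intros Hl [gf [Pf Tf]] [gg [Pg Tg]].
  exists (gcat gg gf). split. apply pc_cat; auto.
  intros z Hz. destruct (Tg z Hz) as [ug [Mg [Ug0 Ug1]]].
  assert (Hgz : on_S1 (g z)) by (rewrite <- Ug1; destruct Mg as [U _]; apply U; lra).
  destruct (Tf (g z) Hgz) as [uf [Mf [Uf0 Uf1]]].
  set (u := fun t => if Rle_dec t (1/2) then ug (2 * t) else uf (2 * t - 1)).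
  destruct Mg as [Ug [Cg [Sg Dg]]], Mf as [Uf [Cf [Sf Df]]].
  exists u. split; [|split].
  - split; [|split].
    + intros t Ht. unfold u. destruct Rle_dec; [apply Ug|apply Uf]; lra.
    + intros t Ht.
      assert (J : fst (ug (2 * (1/2))) = fst (uf (2 * (1/2) - 1)) /\
                  snd (ug (2 * (1/2))) = snd (uf (2 * (1/2) - 1))).
      { replace (2 * (1/2)) with 1 by field. replace (1 - 1) with 0 by ring.
        rewrite Ug1, Uf0. auto. }
      split.
      * apply cext with (fun s => if Rle_dec s (1/2) then fst (ug (2 * s)) else fst (uf (2 * s - 1))).
        { intros s; unfold u; destruct Rle_dec; auto. }
        apply glue_cont; [| |apply J].
        { intros H. apply ccomp with (f := fun s => fst (ug s)). apply derivable_continuous_pt. exists 2; apply d_lin2.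
          apply Cg; lra. }
        { intros H. apply ccomp with (f := fun s => fst (uf s)). apply derivable_continuous_pt. exists 2; apply d_aff2.
          apply Cf; lra. }
      * apply cext with (fun s => if Rle_dec s (1/2) then snd (ug (2 * s)) else snd (uf (2 * s - 1))).
        { intros s; unfold u; destruct Rle_dec; auto. }
        apply glue_cont; [| |apply J].
        { intros H. apply ccomp with (f := fun s => snd (ug s)). apply derivable_continuous_pt. exists 2; apply d_lin2.
          apply Cg; lra. }
        { intros H. apply ccomp with (f := fun s => snd (uf s)). apply derivable_continuous_pt. exists 2; apply d_aff2.
          apply Cf; lra. }
    + exists (map (fun s => s / 2) Sg ++ map (fun s => (s + 1) / 2) Sf ++ (1/2 :: nil)).
      intros t Ht Hn. apply notin_app in Hn as [N1 Hn]. apply notin_app in Hn as [N2 N3].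
      destruct (Rtotal_order t (1/2)) as [Hlt|[Heq|Hgt]].
      * assert (H2t : 0 < 2 * t < 1) by lra.
        assert (N : ~ In (2 * t) Sg).
        { intro I. apply N1. apply in_map_iff. exists (2 * t). split; auto. field. }
        destruct (Dg (2 * t) H2t N) as [dg1 [dg2 [du1 [du2 [D1 [D2 [D3 [D4 [E1 E2]]]]]]]]].
        assert (Ut : u t = ug (2 * t)) by (unfold u; destruct Rle_dec; auto; lra).
        exists (2 * dg1), (2 * dg2), (2 * du1), (2 * du2).
        split; [|split; [|split; [|split; [|split]]]].
        { apply dpl_loc with (fun s => fst (gg (2 * s))) (t - 1) (1/2). lra.
          intros s Hs. unfold gcat. destruct Rle_dec; auto; lra.
          eapply dpl_eq. apply (dcomp (fun s => fst (gg s))). apply d_lin2. exact D1. ring. }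
        { apply dpl_loc with (fun s => snd (gg (2 * s))) (t - 1) (1/2). lra.
          intros s Hs. unfold gcat. destruct Rle_dec; auto; lra.
          eapply dpl_eq. apply (dcomp (fun s => snd (gg s))). apply d_lin2. exact D2. ring. }
        { apply dpl_loc with (fun s => fst (ug (2 * s))) (t - 1) (1/2). lra.
          intros s Hs. unfold u. destruct Rle_dec; auto; lra.
          eapply dpl_eq. apply (dcomp (fun s => fst (ug s))). apply d_lin2. exact D3. ring. }
        { apply dpl_loc with (fun s => snd (ug (2 * s))) (t - 1) (1/2). lra.
          intros s Hs. unfold u. destruct Rle_dec; auto; lra.
          eapply dpl_eq. apply (dcomp (fun s => snd (ug s))). apply d_lin2. exact D4. ring. }
        { rewrite Ut. replace (l * (2 * du1)) with (2 * (l * du1)) by ring. rewrite E1. ring. }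
        { rewrite Ut. replace (l * (2 * du2)) with (2 * (l * du2)) by ring. rewrite E2. ring. }
      * exfalso. apply N3. left; auto.
      * assert (H2t : 0 < 2 * t - 1 < 1) by lra.
        assert (N : ~ In (2 * t - 1) Sf).
        { intro I. apply N2. apply in_map_iff. exists (2 * t - 1). split; auto. field. }
        destruct (Df (2 * t - 1) H2t N) as [dg1 [dg2 [du1 [du2 [D1 [D2 [D3 [D4 [E1 E2]]]]]]]]].
        assert (Ut : u t = uf (2 * t - 1)) by (unfold u; destruct Rle_dec; auto; lra).
        exists (2 * dg1), (2 * dg2), (2 * du1), (2 * du2).
        split; [|split; [|split; [|split; [|split]]]].
        { apply dpl_loc with (fun s => fst (gf (2 * s - 1)) + fst (Cminus (gg 1) (gf 0))) (1/2) (t + 1). lra.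
          intros s Hs. unfold gcat. destruct Rle_dec; [lra|]. reflexivity.
          eapply dpl_eq. apply dplus. apply (dcomp (fun s => fst (gf s))). apply d_aff2. exact D1.
          apply dconst. ring. }
        { apply dpl_loc with (fun s => snd (gf (2 * s - 1)) + snd (Cminus (gg 1) (gf 0))) (1/2) (t + 1). lra.
          intros s Hs. unfold gcat. destruct Rle_dec; [lra|]. reflexivity.
          eapply dpl_eq. apply dplus. apply (dcomp (fun s => snd (gf s))). apply d_aff2. exact D2.
          apply dconst. ring. }
        { apply dpl_loc with (fun s => fst (uf (2 * s - 1))) (1/2) (t + 1). lra.
          intros s Hs. unfold u. destruct Rle_dec; auto; lra.
          eapply dpl_eq. apply (dcomp (fun s => fst (uf s))). apply d_aff2. exact D3. ring. }
        { apply dpl_loc with (fun s => snd (uf (2 * s - 1))) (1/2) (t + 1). lra.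
          intros s Hs. unfold u. destruct Rle_dec; auto; lra.
          eapply dpl_eq. apply (dcomp (fun s => snd (uf s))). apply d_aff2. exact D4. ring. }
        { rewrite Ut. replace (l * (2 * du1)) with (2 * (l * du1)) by ring. rewrite E1. ring. }
        { rewrite Ut. replace (l * (2 * du2)) with (2 * (l * du2)) by ring. rewrite E2. ring. }
  - unfold u. destruct Rle_dec; [|lra]. rewrite Rmult_0_r; auto.
  - unfold u. destruct Rle_dec; [lra|]. replace (2 * 1 - 1) with 1 by ring. auto.
Qed.

Lemma pg_ext l f g : prytz_group l f -> (forall z, on_S1 z -> f z = g z) -> prytz_group l g.
Proof.
  intros [gam [P T]] E. exists gam. split; auto. intros z Hz. rewrite <- E; auto.
Qed.

Definition Rz l (a b : C) : Prop := prytz_group l (fun z => mob a b z).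

Lemma Rz_mult l a1 b1 a2 b2 : 0 < l -> SU a1 b1 -> SU a2 b2 -> Rz l a1 b1 -> Rz l a2 b2 ->
  Rz l (a1 * a2 + b1 * Cconj b2)%C (a1 * b2 + b1 * Cconj a2)%C.
Proof.
  intros Hl S1 S2 R1 R2. unfold Rz.
  eapply pg_ext. apply (concat_G l _ _ Hl R1 R2).
  intros z Hz. apply mob_comp; auto. apply S1_nsq; auto.
Qed.

Lemma Rz_neg l a b : SU a b -> Rz l a b -> Rz l (- a)%C (- b)%C.
Proof.
  intros S R. unfold Rz. eapply pg_ext. apply R. intros z Hz. symmetry. apply mob_neg; auto.
  apply S1_nsq; auto.
Qed.

Lemma Rz_eq l a b a' b' : Rz l a b -> a = a' -> b = b' -> Rz l a' b'.
Proof. intros R -> ->; auto. Qed.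

Lemma real_boost l c s (e : C) : 0 < l -> 1 <= c -> 0 <= s -> c * c - s * s = 1 -> nsq e = 1 ->
  Rz l (RtoC c) (RtoC s * e)%C.
Proof.
  intros Hl Hc Hs E He.
  set (y := c + s). assert (Hy : 0 < y) by (unfold y; lra).
  assert (Hyi : / y = c - s) by (unfold y; field_simplify; [|lra]; field_simplify_eq; nra).
  set (t := ln y).
  assert (Ch : cosh t = c).
  { unfold cosh, t. rewrite exp_Ropp, exp_ln by auto. rewrite Hyi. unfold y; field. }
  assert (Sh : sinh t = s).
  { unfold sinh, t. rewrite exp_Ropp, exp_ln by auto. rewrite Hyi. unfold y; field. }
  eapply Rz_eq. apply (boost_G l t e Hl He). rewrite Ch; auto. rewrite Sh; auto.
Qed.

Lemma sqrt_sq_eq x : 0 <= x -> sqrt x * sqrt x = x.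
Proof. apply sqrt_sqrt. Qed.

Lemma boost_gen l (a b : C) : 0 < l -> SU a b -> snd a = 0 -> 1 <= fst a -> Rz l a b.
Proof.
  intros Hl S Ha2 Ha1.
  set (r := sqrt (nsq b)).
  assert (Hr : r * r = nsq b) by (apply sqrt_sqrt, nsq_nonneg).
  assert (Hr0 : 0 <= r) by apply sqrt_pos.
  assert (Ea : a = RtoC (fst a)) by (destruct a; simpl in *; subst; reflexivity).
  assert (Ec : fst a * fst a - r * r = 1).
  { rewrite Hr. unfold SU, nsq in *. rewrite Ha2 in S. simpl in *. lra. }
  destruct (Req_dec r 0) as [Z|NZ].
  - assert (Eb : b = RtoC 0).
    { apply nsq_zero. rewrite <- Hr, Z. ring. }
    eapply Rz_eq. apply (real_boost l (fst a) r (RtoC 1)); auto. unfold nsq; simpl; ring.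
    auto. rewrite Eb, Z. apply Ceq; simpl; ring.
  - set (e := (fst b / r, snd b / r) : C).
    assert (He : nsq e = 1).
    { unfold e. transitivity (nsq b / (r * r)). unfold nsq; simpl; field; auto.
      rewrite <- Hr. field. intro H; apply NZ; nra. }
    eapply Rz_eq. apply (real_boost l (fst a) r e); auto. auto.
    unfold e. apply Ceq; simpl; field; auto.
Qed.

Lemma RC_mult x y : RtoC (x * y) = (RtoC x * RtoC y)%C.
Proof. apply Ceq; simpl; ring. Qed.
Lemma RC_minus x y : RtoC (x - y) = (RtoC x - RtoC y)%C.
Proof. apply Ceq; simpl; ring. Qed.
Lemma RC_conj x : Cconj (RtoC x) = RtoC x.
Proof. apply Ceq; simpl; ring. Qed.
Lemma RC_nz x : x <> 0 -> RtoC x <> 0%C.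
Proof. intros H E; injection E; auto. Qed.
Lemma nsq_RC x : nsq (RtoC x) = x * x.
Proof. unfold nsq; simpl; ring. Qed.
Lemma unit_conj (e : C) : nsq e = 1 -> (e * Cconj e)%C = RtoC 1.
Proof. intro H. unfold nsq in H. apply Ceq; destruct e; simpl in *; lra. Qed.
Lemma SU_rb c s (e : C) : c * c - s * s = 1 -> nsq e = 1 -> SU (RtoC c) (RtoC s * e)%C.
Proof. intros E He. unfold SU. rewrite nsq_mult, He, !nsq_RC. lra. Qed.

Lemma two_boost l (a b : C) : 0 < l -> SU a b -> 1 < fst a -> Rz l a b.
Proof.
  intros Hl S Ha.
  set (x := fst a - 1). assert (Hx : 0 < x) by (unfold x; lra).
  set (Q := x * x + snd a * snd a). assert (HQ : 0 < Q) by (unfold Q; nra).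
  assert (HB : nsq b = Q + 2 * x).
  { unfold SU, nsq in *. unfold Q, x. destruct a as [a1 a2]; simpl in *. nra. }
  set (Cc := nsq b / (2 * x)).
  assert (HC1 : Cc - 1 = Q / (2 * x)) by (unfold Cc; rewrite HB; field; lra).
  assert (HCg : 0 < Cc - 1) by (rewrite HC1; apply Rdiv_lt_0_compat; lra).
  set (c := sqrt Cc). set (s := sqrt (Cc - 1)).
  assert (Hcc : c * c = Cc) by (apply sqrt_sqrt; lra).
  assert (Hss : s * s = Cc - 1) by (apply sqrt_sqrt; lra).
  assert (Hs0 : 0 < s) by (apply sqrt_lt_R0; lra).
  assert (Hc1 : 1 <= c).
  { unfold c. rewrite <- sqrt_1. apply sqrt_le_1_alt. lra. }
  set (w := ((a - RtoC Cc) / RtoC (Cc - 1))%C).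
  assert (NC1 : RtoC (Cc - 1) <> 0%C) by (apply RC_nz; lra).
  assert (Hw1 : (RtoC 1 + w)%C = ((a - RtoC 1) / RtoC (Cc - 1))%C).
  { unfold w. rewrite RC_minus in *. field; auto. }
  assert (Na1 : (a - RtoC 1)%C <> 0%C).
  { intro E. apply (f_equal fst) in E. simpl in E. lra. }
  assert (Nw1 : (RtoC 1 + w)%C <> 0%C).
  { rewrite Hw1. intro E. apply Na1.
    replace (a - RtoC 1)%C with (((a - RtoC 1) / RtoC (Cc - 1)) * RtoC (Cc - 1))%C by (field; auto).
    rewrite E. ring. }
  assert (Ncs : RtoC (c * s) <> 0%C) by (apply RC_nz; nra).
  set (e2 := (b / (RtoC (c * s) * (RtoC 1 + w)))%C).
  set (e1 := (w * e2)%C).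
  assert (Nw : nsq w = 1).
  { unfold w. rewrite nsq_div by auto. rewrite nsq_RC.
    assert (K : 2 * Cc * x = nsq b) by (unfold Cc; field; lra).
    assert (E : nsq (a - RtoC Cc)%C = (Cc - 1) * (Cc - 1)).
    { unfold SU, nsq in *. unfold x in K.
      destruct a as [a1 a2]; simpl in *. nra. }
    rewrite E. field. lra. }
  assert (Na : nsq (a - RtoC 1)%C = Q) by (unfold Q, x, nsq; destruct a; simpl; ring).
  assert (N1w : nsq (RtoC 1 + w)%C = Q / ((Cc - 1) * (Cc - 1))).
  { rewrite Hw1, nsq_div, Na, nsq_RC; auto. }
  assert (Nden : (RtoC (c * s) * (RtoC 1 + w))%C <> 0%C).
  { intro E. apply (f_equal nsq) in E. rewrite nsq_mult, nsq_RC, N1w in E.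
    unfold nsq in E; simpl in E.
    assert (0 < (c * s) * (c * s) * (Q / ((Cc - 1) * (Cc - 1)))).
    { apply Rmult_lt_0_compat. nra. apply Rdiv_lt_0_compat; nra. }
    lra. }
  assert (Ne2 : nsq e2 = 1).
  { unfold e2. rewrite nsq_div, nsq_mult, nsq_RC, N1w by auto.
    replace ((c * s) * (c * s)) with (Cc * (Cc - 1)) by (rewrite <- Hss, <- Hcc; ring).
    rewrite HC1. unfold Cc. rewrite HB. field. lra. }
  assert (Ne1 : nsq e1 = 1) by (unfold e1; rewrite nsq_mult, Nw, Ne2; ring).
  assert (Ea : (RtoC c * RtoC c + (RtoC s * e1) * Cconj (RtoC s * e2))%C = a).
  { rewrite Cmult_conj, RC_conj. unfold e1.
    transitivity (RtoC c * RtoC c + RtoC s * RtoC s * w * (e2 * Cconj e2))%C. ring.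
    rewrite unit_conj by auto. rewrite <- !RC_mult, Hcc, Hss. unfold w. field. auto. }
  assert (Eb : (RtoC c * (RtoC s * e2) + (RtoC s * e1) * Cconj (RtoC c))%C = b).
  { rewrite RC_conj. unfold e1.
    transitivity (RtoC c * RtoC s * e2 * (RtoC 1 + w))%C. ring.
    rewrite <- RC_mult. unfold e2. field. auto. }
  assert (E1 : c * c - s * s = 1) by lra.
  assert (R1 : Rz l (RtoC c) (RtoC s * e1)%C) by (apply real_boost; auto; lra).
  assert (R2 : Rz l (RtoC c) (RtoC s * e2)%C) by (apply real_boost; auto; lra).
  eapply Rz_eq. apply (Rz_mult l _ _ _ _ Hl (SU_rb _ _ _ E1 Ne1) (SU_rb _ _ _ E1 Ne2) R1 R2).
  exact Ea. exact Eb.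
Qed.

Lemma rot_pos l (w : C) : 0 < l -> nsq w = 1 -> 0 < fst w -> Rz l w (RtoC 0).
Proof.
  intros Hl Hw Hf.
  set (c := 1 + 1 / fst w). assert (Hc : 1 < c) by (unfold c; assert (0 < 1 / fst w) by (apply Rdiv_lt_0_compat; lra); lra).
  set (s := sqrt (c * c - 1)).
  assert (Hss : s * s = c * c - 1) by (apply sqrt_sqrt; nra).
  assert (Hs0 : 0 <= s) by apply sqrt_pos.
  assert (E1 : c * c - s * s = 1) by lra.
  assert (SH : SU (w * RtoC c)%C (- (w * RtoC s))%C).
  { unfold SU. replace (- (w * RtoC s))%C with (w * RtoC (- s))%C by (apply Ceq; simpl; ring).
    rewrite !nsq_mult, Hw, !nsq_RC. lra. }
  assert (RH : Rz l (w * RtoC c)%C (- (w * RtoC s))%C).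
  { apply two_boost; auto. simpl. rewrite Rmult_0_r, Rminus_0_r.
    replace (fst w * c) with (fst w + 1) by (unfold c; field; lra). lra. }
  assert (SB : SU (RtoC c) (RtoC s * RtoC 1)%C) by (apply SU_rb; auto; unfold nsq; simpl; ring).
  assert (RB : Rz l (RtoC c) (RtoC s * RtoC 1)%C) by (apply real_boost; auto; try lra; unfold nsq; simpl; ring).
  eapply Rz_eq. apply (Rz_mult l _ _ _ _ Hl SH SB RH RB).
  - apply Ceq; destruct w as [w1 w2]; simpl.
    + transitivity (w1 * (c * c - s * s)). ring. rewrite E1; ring.
    + transitivity (w2 * (c * c - s * s)). ring. rewrite E1; ring.
  - apply Ceq; destruct w as [w1 w2]; simpl; ring.
Qed.

Lemma rot_any l (w : C) : 0 < l -> nsq w = 1 -> Rz l w (RtoC 0).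
Proof.
  intros Hl Hw.
  destruct (Rtotal_order (fst w) 0) as [Hn|[Hz|Hp]].
  - assert (R : Rz l (- w)%C (RtoC 0)).
    { apply rot_pos; auto. unfold nsq in *; destruct w; simpl in *; nra. simpl; lra. }
    assert (S : SU (- w)%C (RtoC 0)) by (unfold SU, nsq in *; destruct w; simpl in *; nra).
    eapply Rz_eq. apply (Rz_neg l _ _ S R). apply Ceq; simpl; ring. apply Ceq; simpl; ring.
  - destruct w as [w1 w2]. simpl in Hz. subst w1. unfold nsq in Hw; simpl in Hw.
    set (r := sqrt 2). assert (Hr : r * r = 2) by (apply sqrt_sqrt; lra).
    assert (Hr0 : 0 < r) by (apply sqrt_lt_R0; lra).
    set (v := (1 / r, w2 / r) : C).
    assert (Hv : nsq v = 1).
    { transitivity ((1 + w2 * w2) / (r * r)). unfold v, nsq; simpl; field; lra.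
      rewrite Hr. replace (w2 * w2) with 1 by nra. field. }
    assert (Sv : SU v (RtoC 0)) by (unfold SU; rewrite Hv; unfold nsq; simpl; ring).
    assert (Rv : Rz l v (RtoC 0)) by (apply rot_pos; auto; unfold v; simpl; apply Rdiv_lt_0_compat; lra).
    eapply Rz_eq. apply (Rz_mult l _ _ _ _ Hl Sv Sv Rv Rv).
    + unfold v. apply Ceq; simpl.
      * transitivity ((1 - w2 * w2) / (r * r)). field; lra. replace (w2 * w2) with 1 by nra. field; lra.
      * transitivity (2 * w2 / (r * r)). field; lra. rewrite Hr. field.
    + apply Ceq; simpl; ring.
  - apply rot_pos; auto.
Qed.

Lemma all_Rz l (a b : C) : 0 < l -> SU a b -> Rz l a b.
Proof.
  intros Hl S.
  assert (Ha : 1 <= nsq a) by (unfold SU in S; pose proof (nsq_nonneg b); lra).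
  set (r := sqrt (nsq a)).
  assert (Hr : r * r = nsq a) by (apply sqrt_sqrt; lra).
  assert (Hr1 : 1 <= r) by (unfold r; rewrite <- sqrt_1; apply sqrt_le_1_alt; lra).
  set (w := (fst a / r, snd a / r) : C).
  assert (Hw : nsq w = 1).
  { unfold w. transitivity (nsq a / (r * r)). unfold nsq; simpl; field; lra. rewrite Hr; field; lra. }
  assert (Sw : SU w (RtoC 0)) by (unfold SU; rewrite Hw; unfold nsq; simpl; ring).
  assert (SB : SU (RtoC r) (Cconj w * b)%C).
  { unfold SU. rewrite nsq_mult, nsq_conj, Hw, nsq_RC, Hr. unfold SU in S. lra. }
  assert (RB : Rz l (RtoC r) (Cconj w * b)%C) by (apply boost_gen; auto; simpl; lra).
  eapply Rz_eq. apply (Rz_mult l _ _ _ _ Hl Sw SB (rot_any l w Hl Hw) RB).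
  - unfold w. apply Ceq; simpl; field; lra.
  - transitivity ((w * Cconj w) * b)%C. apply Ceq; simpl; ring.
    rewrite unit_conj by auto. apply Ceq; simpl; ring.
Qed.

Lemma M_sub_G l f : 0 < l -> mobius_S1 f -> prytz_group l f.
Proof.
  intros Hl [a [b [E H]]].
  assert (S : SU a b) by (unfold SU; rewrite <- !Cmod2_nsq; auto).
  eapply pg_ext. apply (all_Rz l a b Hl S). intros z Hz. symmetry. apply H; auto.
Qed.

Lemma G_mob l f : 0 < l -> prytz_group l f -> mobius_S1 f.
Proof. intros Hl [gm [P T]]. apply (G_sub_M l gm f); auto. Qed.


Theorem theorem1 (l : R) (hl : 0 < l) :
  (* G is a group under composition (of maps of S^1) *)
  prytz_group l (fun z => z) /\
  (forall f g, prytz_group l f -> prytz_group l g ->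
     prytz_group l (fun z => f (g z))) /\
  (forall f, prytz_group l f ->
     exists g, prytz_group l g /\
       forall z, on_S1 z -> on_S1 (f z) /\ on_S1 (g z) /\
                            g (f z) = z /\ f (g z) = z) /\
  (* and G = M_0(S^1) *)
  (forall f, prytz_group l f <-> mobius_S1 f).
Proof.
  split; [|split; [|split]].
  - apply M_sub_G; auto. exists (RtoC 1), (RtoC 0). split.
    + rewrite !Cmod2_nsq. unfold nsq; simpl; ring.
    + intros z Hz. symmetry. apply (mob_id z).
  - intros f g Hf Hg. apply concat_G; auto.
  - intros f Hf. destruct (G_mob l f hl Hf) as [a [b [E H]]].
    assert (S : SU a b) by (unfold SU; rewrite <- !Cmod2_nsq; auto).
    assert (S' : SU (Cconj a) (- b)%C).
    { unfold SU in *. rewrite nsq_conj. destruct b; unfold nsq in *; simpl in *. lra. }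
    assert (Hf' : forall z, on_S1 z -> f z = mob a b z) by exact H.
    exists (fun z => mob (Cconj a) (- b)%C z). split.
    + apply all_Rz; auto.
    + intros z Hz. pose proof Hz as Hz'. apply S1_nsq in Hz'.
      assert (Gz : on_S1 (mob (Cconj a) (- b)%C z)) by (apply S1_nsq, mob_S1; auto).
      split; [|split; [|split]].
      * rewrite Hf' by auto. apply S1_nsq, mob_S1; auto.
      * exact Gz.
      * rewrite Hf' by auto. apply mob_inv1; auto.
      * rewrite Hf' by auto. apply mob_inv2; auto.
  - intros f. split. apply G_mob; auto. apply M_sub_G; auto.
Qed.
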